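(* Let $(\mathcal{X},\mathcal{B},\lambda)$ be a measure space with $\lambda$ positive and $\sigma$-finite, $P$ a probability measure with density $f\in\mathcal{L}^2(\mathcal{X},\lambda)$ with respect to $\lambda$, and $X_1,\dots,X_N$ i.i.d. with law $P$. Let $f_1,\dots,f_m\in\mathcal{L}^2$ with $D_k=\int f_k^2d\lambda>0$, and assume there are known constants $C_k>0$ with $|f_k(x)|\le\sqrt{C_kD_k}$ for all $x\in\mathcal{X}$ and all $k$. Let $\varepsilon>0$ and, for each $k$, let $\beta_{k,1},\beta_{k,2}$ be real numbers with $0<\beta_{k,j}<\frac{N}{\sqrt{C_kD_k}}$, $j\in\{1,2\}$. Then with $P^{\otimes N}$-probability at least $1-\varepsilon$, for all $k\in\{1,\dots,m\}$, $$\alpha^{\inf}_k(\varepsilon,\beta_{k,1})\le\overline{\alpha}_k\le\alpha^{\sup}_k(\varepsilon,\beta_{k,2}),$$ where $$\alpha^{\sup}_k(\varepsilon,\beta)=\frac{N-N\exp\left[\frac1N\sum_{i=1}^N\log\left(1-\frac{\beta}{N}f_k(X_i)\right)-\frac{\log\frac{2m}{\varepsilon}}{N}\right]}{D_k\beta},$$ $$\alpha^{\inf}_k(\varepsilon,\beta)=\frac{N\exp\left[\frac1N\sum_{i=1}^N\log\left(1+\frac{\beta}{N}f_k(X_i)\right)-\frac{\log\frac{2m}{\varepsilon}}{N}\right]-N}{D_k\beta}.$$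
   Context: $\overline{\alpha}_k=\arg\min_{\alpha\in\mathbb{R}}\int(\alpha f_k-f)^2d\lambda=\frac{\int f_kf\,d\lambda}{D_k}$. *)

(* Defs.v *)
From HB Require Import structures.
From mathcomp Require Import all_boot all_order all_algebra.
From mathcomp Require Import all_classical all_reals all_analysis.
Set Implicit Arguments. Unset Strict Implicit. Unset Printing Implicit Defensive.
Import Order.TTheory GRing.Theory Num.Theory.
Local Open Scope classical_set_scope.
Local Open Scope ring_scope.

(* X : 'I_N -> Omega -> T is an i.i.d. sample of law P on the probability
   space (Omega, Pr): each X i is measurable, has law P, and the family is
   mutually independent (product rule for every family of measurable sets;
   taking A i = setT recovers every finite subfamily). *)
Definition iid_sample {R : realType} {dO dT : measure_display}
  {Omega : measurableType dO} {T : measurableType dT}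
  (Pr : probability Omega R) (P : probability T R) (N : nat)
  (X : 'I_N -> Omega -> T) : Prop :=
  (forall i, measurable_fun setT (X i)) /\
  (forall i (A : set T), measurable A -> Pr (X i @^-1` A) = P A) /\
  (forall A : 'I_N -> set T, (forall i, measurable (A i)) ->
     Pr (\bigcap_(i in [set: 'I_N]) (X i @^-1` A i)) =
     (\prod_(i < N) Pr (X i @^-1` A i))%E).

Definition alpha_sup {R : realType} {T : Type} (N m : nat) (eps Dk beta : R)
  (fk : T -> R) (xs : 'I_N -> T) : R :=
  (N%:R - N%:R * expR (N%:R^-1 * (\sum_(i < N) ln (1 - beta / N%:R * fk (xs i)))
                        - ln (2 * m%:R / eps) / N%:R)) / (Dk * beta).

Definition alpha_inf {R : realType} {T : Type} (N m : nat) (eps Dk beta : R)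
  (fk : T -> R) (xs : 'I_N -> T) : R :=
  (N%:R * expR (N%:R^-1 * (\sum_(i < N) ln (1 + beta / N%:R * fk (xs i)))
                 - ln (2 * m%:R / eps) / N%:R) - N%:R) / (Dk * beta).

Arguments alpha_sup {R T} N m eps Dk beta fk xs.
Arguments alpha_inf {R T} N m eps Dk beta fk xs.

(* Main.v *)
Require Import Defs.
From HB Require Import structures.
From mathcomp Require Import all_boot all_order all_algebra.
From mathcomp Require Import all_classical all_reals all_analysis.
From mathcomp Require Import measurable_realfun finmap.
From mathcomp Require Import ring lra.
Import Order.TTheory GRing.Theory Num.Theory.
Import HBNNSimple HBSimple numFieldNormedType.Exports.
Local Open Scope classical_set_scope.
Local Open Scope ring_scope.
Section transfer.
Local Open Scope ereal_scope.
Context (R : realType) (dT : measure_display) (T : measurableType dT).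

Lemma mind_comp (d : measure_display) (O : measurableType d) (p : O -> T) (g : O -> R) A c :
  measurable_fun setT p -> measurable_fun setT g -> measurable A ->
  measurable_fun setT (fun x => ((c * \1_A (p x) * g x)%R)%:E).
Proof.
move=> mp mg mA; apply/measurable_EFinP; apply: measurable_funM => //.
apply: measurable_funM => //.
by apply: (measurableT_comp _ mp); exact: measurable_indic.
Qed.

Lemma sfun_expand (d : measure_display) (O : measurableType d) (mu : {measure set O -> \bar R})
  (p : O -> T) (g : O -> R) (s : {nnsfun T >-> R}) :
  measurable_fun setT p -> measurable_fun setT g -> (forall x, 0 <= g x)%R ->
  \int[mu]_x ((s (p x) * g x)%R)%:E =
  \sum_(y <- fset_set (range s)) y%:E * \int[mu]_x ((\1_(s @^-1` [set y]) (p x) * g x)%R)%:E.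
Proof.
move=> mp mg g0.
have ge0 y : y \in fset_set (range s) -> (0 <= y)%R.
  by rewrite in_fset_set; [move=> /set_mem [t _ <-]; exact: fun_ge0 | exact: fimfunP].
transitivity (\int[mu]_x (\sum_(y <- fset_set (range s)) ((`|y| * \1_(s @^-1` [set y]) (p x) * g x)%R)%:E)).
  apply: eq_integral => x _; rewrite fimfunE fsbig_finite; last exact: fimfunP.
  rewrite /= big_distrl /= -sumEFin.
  by apply: eq_big_seq => y /ge0 y0; rewrite ger0_norm.
rewrite ge0_integral_sum //; last first.
- by move=> y x _; rewrite lee_fin mulr_ge0 // mulr_ge0 //.
- by move=> y; apply: mind_comp.
apply: eq_big_seq => y /ge0 y0.
under eq_integral do rewrite -mulrA EFinM.
rewrite ge0_integralZl_EFin //= ?ger0_norm // => [x _|]; first by rewrite lee_fin mulr_ge0.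
have := @mind_comp _ _ _ _ _ 1%R mp mg (measurable_funPTI s (measurable_set1 y)).
by apply: eq_measurable_fun => x _; rewrite mul1r.
Qed.

Lemma transfer (d1 d2 : measure_display) (O1 : measurableType d1) (O2 : measurableType d2)
  (mu1 : {measure set O1 -> \bar R}) (mu2 : {measure set O2 -> \bar R})
  (p1 : O1 -> T) (p2 : O2 -> T) (g1 : O1 -> R) (g2 : O2 -> R) :
  measurable_fun setT p1 -> measurable_fun setT p2 ->
  measurable_fun setT g1 -> measurable_fun setT g2 ->
  (forall x, 0 <= g1 x)%R -> (forall x, 0 <= g2 x)%R ->
  (forall A, measurable A -> \int[mu1]_x ((\1_A (p1 x) * g1 x)%R)%:E =
                            \int[mu2]_x ((\1_A (p2 x) * g2 x)%R)%:E) ->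
  forall h : T -> R, measurable_fun setT h -> (forall t, 0 <= h t)%R ->
  \int[mu1]_x ((h (p1 x) * g1 x)%R)%:E = \int[mu2]_x ((h (p2 x) * g2 x)%R)%:E.
Proof.
move=> mp1 mp2 mg1 mg2 g10 g20 hA h mh h0.
have mhE : measurable_fun setT (EFin \o h) by exact/measurable_EFinP.
pose s := nnsfun_approx measurableT mhE.
have ss n : \int[mu1]_x ((s n (p1 x) * g1 x)%R)%:E = \int[mu2]_x ((s n (p2 x) * g2 x)%R)%:E.
  rewrite !sfun_expand //; apply: eq_bigr => y _; rewrite hA //.
have cv t : (s n t)%R @[n --> \oo] --> h t.
  have := @cvg_approx _ _ _ setT (EFin \o h) t (fun x _ => h0 x) I (ltry _).
  by apply: cvg_trans; apply: near_eq_cvg; near=> n; rewrite /s nnsfun_approxE.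
have key (d : measure_display) (O : measurableType d) (mu : {measure set O -> \bar R})
    (p : O -> T) (g : O -> R) :
    measurable_fun setT p -> measurable_fun setT g -> (forall x, 0 <= g x)%R ->
    \int[mu]_x ((h (p x) * g x)%R)%:E =
    limn (fun n => \int[mu]_x ((s n (p x) * g x)%R)%:E).
  move=> mp mg g0.
  rewrite -monotone_convergence //.
  - apply: eq_integral => x _; apply/esym/cvg_lim => //.
    apply: cvg_EFin; first by apply: nearW.
    exact: cvgMl.
  - move=> n; apply/measurable_EFinP; apply: measurable_funM => //.
    exact: measurableT_comp.
  - by move=> n x _; rewrite lee_fin mulr_ge0.
  - move=> x _ m n mn; rewrite lee_fin ler_wpM2r //.
    by have /lefP := nd_nnsfun_approx measurableT mhE mn; apply.
rewrite (key _ _ mu1) // (key _ _ mu2) //; congr (limn _); apply/funext => n; exact: ss.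
Unshelve. all: by end_near.
Qed.
End transfer.
Section indep.
Local Open Scope ereal_scope.
Context (R : realType) (dO dT : measure_display) (Omega : measurableType dO)
  (T : measurableType dT) (Pr : probability Omega R) (P : probability T R)
  (N : nat) (X : 'I_N -> Omega -> T).
Hypothesis iid : iid_sample Pr P X.

Let mX i : measurable_fun setT (X i). Proof. by case: iid. Qed.
Let lawX i A : measurable A -> Pr (X i @^-1` A) = P A. Proof. by case: iid => _ [+ _]; apply. Qed.
Let indX (A : 'I_N -> set T) : (forall i, measurable (A i)) ->
     Pr (\bigcap_(i in [set: 'I_N]) (X i @^-1` A i)) = \prod_(i < N) Pr (X i @^-1` A i).
Proof. by case: iid => _ [_]; apply. Qed.

Lemma prod_indic (A : 'I_N -> set T) w :
  (\prod_(i < N) \1_(A i) (X i w) = \1_(\bigcap_(i in [set: 'I_N]) (X i @^-1` A i)) w :> R)%R.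
Proof.
have [allA|] := pselect (forall i, A i (X i w)).
  rewrite indicE mem_set; last by move=> i _; exact: allA.
  by rewrite big1 // => i _; rewrite indicE mem_set.
rewrite -existsNE => -[i nAi]; rewrite indicE memNset; last by move=> /(_ i I).
by rewrite (bigD1 i) //= indicE memNset // mul0r.
Qed.

Lemma int_bounded (h : T -> R) (M : R) : (0 <= M)%R -> measurable_fun setT h ->
  (forall t, 0 <= h t <= M)%R -> \int[P]_t (h t)%:E \is a fin_num.
Proof.
move=> M0 mh hb; rewrite ge0_fin_numE; last first.
  by apply: integral_ge0 => t _; rewrite lee_fin; case/andP: (hb t).
apply: (@le_lt_trans _ _ (\int[P]_t (cst M%:E) t)).
  apply: ge0_le_integral => //.
  - by move=> t _; rewrite lee_fin; case/andP: (hb t).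
  - exact/measurable_EFinP.
  - by move=> t _; rewrite lee_fin; case/andP: (hb t).
rewrite integral_cst //; apply: (@le_lt_trans _ _ (M%:E * 1)); last by rewrite mule1 ltry.
by apply: lee_wpmul2l; [rewrite lee_fin | exact: probability_le1].
Qed.

Lemma indep_claim (M : R) (n : nat) : (1 <= M)%R ->
  forall (h : 'I_N -> T -> R) (A : 'I_N -> set T),
  (forall i, measurable (A i)) -> (forall i, measurable_fun setT (h i)) ->
  (forall i t, 0 <= h i t <= M)%R -> (forall i : 'I_N, (n <= i)%N -> h i = \1_(A i)) ->
  \int[Pr]_w ((\prod_(i < N) h i (X i w))%R)%:E = \prod_(i < N) \int[P]_t (h i t)%:E.
Proof.
move=> M1; elim: n => [|n IH] h A mA mh hb hA.
  under eq_integral => w _.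
    rewrite (eq_bigr (fun i => \1_(A i) (X i w))); last by move=> i _; rewrite hA.
    rewrite prod_indic; over.
  rewrite integral_indic //; last first.
    apply: fin_bigcap_measurable => // i _; rewrite -[X i @^-1` _]setTI.
    exact: mX.
  rewrite setIT; apply: etrans; first exact: (indX A mA).
  apply: eq_bigr => i _.
  by rewrite hA // integral_indic // setIT lawX.
have [nN|nN] := ltnP n N; last first.
  apply: (IH h A) => // i ni; exfalso.
  by move: (ltn_ord i); rewrite ltnNge (leq_trans nN ni).
pose j := Ordinal nN.
pose G w := (\prod_(i < N | i != j) h i (X i w))%R.
have mG : measurable_fun setT G.
  rewrite /G; under eq_fun do rewrite big_mkcond /=.
  apply: measurable_prod => i _; case: (i != j) => //.
  exact: measurableT_comp.
have G0 w : (0 <= G w)%R by apply: prodr_ge0 => i _; case/andP: (hb i (X i w)).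
have fin i : \int[P]_t (h i t)%:E \is a fin_num by exact: (@int_bounded (h i) M (le_trans ler01 M1) (mh i) (hb i)).
pose c := (\prod_(i < N | i != j) fine (\int[P]_t (h i t)%:E))%R.
have cE : c%:E = \prod_(i < N | i != j) \int[P]_t (h i t)%:E.
  by rewrite -prodEFin; apply: eq_bigr => i _; rewrite fineK.
have c0 : (0 <= c)%R.
  by apply: prodr_ge0 => i _; apply: fine_ge0; apply: integral_ge0 => t _; rewrite lee_fin; case/andP: (hb i t).
have split (k : 'I_N -> T -> R) w : (\prod_(i < N) k i (X i w) = k j (X j w) * \prod_(i < N | i != j) k i (X i w))%R.
  by rewrite (bigD1 j).
have tr := @transfer R dT T dO dT Omega T Pr P (X j) id G (fun=> c) (mX j) (@measurable_id _ _ setT) mG (measurable_cst _) G0 (fun=> c0).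
have step : forall B, measurable B -> \int[Pr]_w ((\1_B (X j w) * G w)%R)%:E = \int[P]_t ((\1_B (id t) * c)%R)%:E.
  move=> B mB.
  pose h' i := if i == j then \1_B else h i.
  pose A' i := if i == j then B else A i.
  have e1 w : (\prod_(i < N) h' i (X i w) = \1_B (X j w) * G w)%R.
    rewrite split /h' eqxx; congr (_ * _)%R; apply: eq_bigr => i /negbTE ->.
    by [].
  transitivity (\int[Pr]_w ((\prod_(i < N) h' i (X i w))%R)%:E).
    by apply: eq_integral => w _; rewrite e1.
  rewrite (IH h' A').
  - rewrite (bigD1 j) //= {1}/h' eqxx.
    rewrite (eq_bigr (fun i => \int[P]_t (h i t)%:E)); last first.
      by move=> i /negbTE ij; rewrite /h' ij.
    rewrite -cE.
    under [RHS]eq_integral do rewrite mulrC EFinM.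
    rewrite ge0_integralZl_EFin //; first by rewrite muleC.
    exact/measurable_EFinP/measurable_indic.
  - by move=> i; rewrite /A'; case: ifP.
  - by move=> i; rewrite /h'; case: ifP => _ //; exact: measurable_indic.
  - move=> i t; rewrite /h'; case: ifP => _; last exact: hb.
    by rewrite indicE; case: (t \in B); rewrite /= ?lexx ?M1 ?ler01 ?(le_trans ler01 M1).
  - move=> i ni; rewrite /h' /A'; case: eqP => // /eqP ij; apply: hA.
    rewrite ltn_neqAle ni andbT; apply: contra ij => /eqP e.
    by apply/eqP/val_inj; rewrite /= e.
rewrite (eq_integral (fun w => ((h j (X j w) * G w)%R)%:E)); last by move=> w _; rewrite split.
rewrite tr //; last by move=> t; case/andP: (hb j t).
rewrite (bigD1 j) //= -cE.
under eq_integral do rewrite EFinM.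
rewrite -[RHS]muleC -ge0_integralZl_EFin //.
- by apply: eq_integral => t _; rewrite muleC.
- by move=> t _; rewrite lee_fin; case/andP: (hb j t).
- exact/measurable_EFinP.
Qed.
Lemma indep_prod (M : R) (h : 'I_N -> T -> R) : (1 <= M)%R ->
  (forall i, measurable_fun setT (h i)) -> (forall i t, 0 <= h i t <= M)%R ->
  \int[Pr]_w ((\prod_(i < N) h i (X i w))%R)%:E = \prod_(i < N) \int[P]_t (h i t)%:E.
Proof.
move=> M1 mh hb; apply: (@indep_claim M N M1 h (fun=> setT)) => // i iN.
by move: (ltn_ord i); rewrite ltnNge iN.
Qed.
End indep.

Lemma union_bound (R : realType) (d : measure_display) (O : measurableType d)
  (mu : {measure set O -> \bar R}) (I : Type) (s : seq I) (F : I -> set O) :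
  (forall i, measurable (F i)) ->
  (mu (\big[setU/set0]_(i <- s) F i) <= \sum_(i <- s) mu (F i))%E.
Proof.
move=> mF; elim: s => [|i s IH]; first by rewrite !big_nil measure0.
rewrite !big_cons; apply: le_trans (measureU2 _ _ _) _ => //.
  exact: bigsetU_measurable.
exact: leeD.
Qed.
Section main.
Local Open Scope ereal_scope.
Context (R : realType) (dT : measure_display) (T : measurableType dT)
  (lam : {measure set T -> \bar R}) (f : T -> R) (P : probability T R).
Hypothesis mf : measurable_fun setT f.
Hypothesis f0 : {ae lam, forall x, (0 <= f x)%R}.
Hypothesis Pf : forall A, measurable A -> P A = (\int[lam]_(x in A) (f x)%:E)%E.

Let fp := f \max (cst 0%R).
Let mfp : measurable_fun setT fp. Proof. exact: measurable_maxr. Qed.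
Let fp0 x : (0 <= fp x)%R. Proof. by rewrite /fp /= le_max lexx orbT. Qed.

Let PfA A : measurable A -> P A = \int[lam]_x ((\1_A x * fp x)%R)%:E.
Proof.
move=> mA; rewrite Pf // (ae_eq_integral (fun x => (fp x)%:E)) //.
- rewrite integral_mkcond; apply: eq_integral => x _.
  by rewrite patchE indicE; case: (x \in A); rewrite ?mul1r ?mul0r.
- by apply: measurable_funTS; exact/measurable_EFinP.
- by apply: measurable_funTS; exact/measurable_EFinP.
- near=> x => _; have fx0 : (0 <= f x)%R by near: x.
  by rewrite /fp /= max_l.
Unshelve. all: by end_near.
Qed.

Let int_fp : lam.-integrable setT (fun x => (fp x)%:E).
Proof.
apply/integrableP; split; first exact/measurable_EFinP.
under eq_integral do rewrite gee0_abs ?lee_fin //.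
have := PfA setT measurableT; under eq_integral do rewrite indicE mem_set // mul1r.
move=> <-; have -> : P setT = 1 by exact: probability_setT.
exact: ltry.
Qed.

Let int_fp1 : \int[lam]_x (fp x)%:E = 1.
Proof.
have := PfA setT measurableT; under eq_integral do rewrite indicE mem_set // mul1r.
move=> <-; exact: probability_setT.
Qed.

Lemma EP (Y : T -> R) (a s : R) : measurable_fun setT Y ->
  (forall x, `|Y x| <= s)%R -> (`|a| * s < 1)%R ->
  \int[P]_t ((1 + a * Y t)%R)%:E = ((1 + a * Rintegral lam setT (fun x => Y x * f x))%R)%:E.
Proof.
move=> mY Ys as1.
have g0 t : (0 <= 1 + a * Y t)%R.
  have : (`|a * Y t| < 1)%R.
    by rewrite normrM (le_lt_trans (ler_wpM2l (normr_ge0 a) (Ys t))).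
  rewrite ltr_norml => /andP[h _]; lra.
have mg : measurable_fun setT (fun t => 1 + a * Y t)%R.
  by apply: measurable_funD => //; apply: measurable_funM.
have hA A : measurable A -> \int[P]_x ((\1_A (id x) * 1)%R)%:E = \int[lam]_x ((\1_A (id x) * fp x)%R)%:E.
  move=> mA; rewrite -PfA //.
  transitivity (\int[P]_x (\1_A x)%:E); first by apply: eq_integral => x _; rewrite mulr1.
  by rewrite integral_indic // setIT.
have := @transfer R dT T dT dT T T P lam id id (fun=> 1%R) fp (@measurable_id _ _ setT)
   (@measurable_id _ _ setT) (measurable_cst _) mfp (fun=> ler01) fp0 hA _ mg g0.
under eq_integral do rewrite mulr1.
move=> ->.
have iYfp : lam.-integrable setT (fun x => ((Y x * fp x)%R)%:E).
  apply: (le_integrable measurableT (g := fun x => s%:E * (fp x)%:E)).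
  - by apply/measurable_EFinP; apply: measurable_funM.
  - move=> x _; rewrite -EFinM !abse_EFin lee_fin normrM (ger0_norm (fp0 x)).
    by rewrite normrM (ger0_norm (fp0 x)) ler_wpM2r // (le_trans (Ys x)) // ler_norm.
  - exact: integrableZl.
under eq_integral do rewrite mulrDl mul1r -mulrA EFinD EFinM.
rewrite integralD //; last exact: integrableZl.
rewrite integralZl // int_fp1.
have -> : \int[lam]_x ((Y x * fp x)%R)%:E = (Rintegral lam setT (fun x => Y x * f x))%:E.
  rewrite /Rintegral (ae_eq_integral (fun x => ((Y x * fp x)%R)%:E) (fun x => ((Y x * f x)%R)%:E)) //.
  - by rewrite fineK //; exact: (integrable_fin_num measurableT iYfp).
  - by apply/measurable_EFinP; apply: measurable_funM.
  - by apply/measurable_EFinP; apply: measurable_funM.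
  - near=> x => _; have fx0 : (0 <= f x)%R by near: x.
    by rewrite /fp /= max_l.
by [].
Unshelve. all: by end_near.
Qed.
Variables (dO : measure_display) (Omega : measurableType dO) (Pr : probability Omega R)
  (N : nat) (X : 'I_N -> Omega -> T).
Hypothesis iid : iid_sample Pr P X.

Lemma bad_bound (Y : T -> R) (a s K : R) : measurable_fun setT Y ->
  (forall x, `|Y x| <= s)%R -> (`|a| * s < 1)%R -> (0 < K)%R ->
  (0 < 1 + a * Rintegral lam setT (fun x => Y x * f x))%R /\
  Pr [set w | (K * (1 + a * Rintegral lam setT (fun x => Y x * f x)) ^+ N
               <= \prod_(i < N) (1 + a * Y (X i w)))%R] <= (K^-1)%:E.
Proof.
move=> mY Ys as1 K0.
set q := (1 + a * _)%R.
have hEP := @EP Y a s mY Ys as1; rewrite -/q in hEP.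
have gb t : (1 - `|a| * s <= 1 + a * Y t <= 2)%R.
  have : (`|a * Y t| <= `|a| * s)%R by rewrite normrM ler_wpM2l.
  rewrite ler_norml => /andP[h1 h2]; apply/andP; split; lra.
have mg : measurable_fun setT (fun t => 1 + a * Y t)%R.
  by apply: measurable_funD => //; apply: measurable_funM.
have q0 : (0 < q)%R.
  apply: (@lt_le_trans _ _ (1 - `|a| * s)%R); first by lra.
  rewrite -lee_fin -hEP.
  have -> : ((1 - `|a| * s)%R)%:E = \int[P]_t (cst ((1 - `|a| * s)%R)%:E) t.
    rewrite integral_cst //; set u := (UU in (_ * UU)%E).
    have -> : u = 1 by exact: probability_setT.
    by rewrite mule1.
  apply: ge0_le_integral => //.
  - by move=> t _; rewrite lee_fin; lra.
  - exact/measurable_EFinP.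
  - by move=> t _; rewrite lee_fin; case/andP: (gb t).
split => //.
pose Z w := (\prod_(i < N) (1 + a * Y (X i w)))%R.
have mX i : measurable_fun setT (X i) by case: iid.
have mZ : measurable_fun setT Z.
  apply: measurable_prod => i _.
  exact: (measurableT_comp mg (mX i)).
have Z0 w : (0 <= Z w)%R.
  apply: prodr_ge0 => i _; case/andP: (gb (X i w)) => h _; lra.
have EZ : \int[Pr]_w (Z w)%:E = (q ^+ N)%:E.
  rewrite (@indep_prod R dO dT Omega T Pr P N X iid 2 (fun _ t => 1 + a * Y t)%R) //.
  - rewrite (eq_bigr (fun=> q%:E)) // prodEFin.
    by rewrite prodr_const card_ord.
  - lra.
  - move=> i t; case/andP: (gb t) => h1 h2; apply/andP; split => //; lra.
set t := (K * q ^+ N)%R.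
have t0 : (0 < t)%R by rewrite mulr_gt0 // exprn_gt0.
set S := [set w | (t <= \prod_(i < N) (1 + a * Y (X i w)))%R].
have mS : measurable S.
  have := measurable_fun_le measurableT (measurable_cst t) mZ.
  by rewrite setTI.
have markov : t%:E * Pr S <= (q ^+ N)%:E.
  have -> : Pr S = \int[Pr]_w (\1_S w)%:E by rewrite integral_indic // setIT.
  rewrite -EZ -ge0_integralZl_EFin //; last 2 first.
  - exact/measurable_EFinP/measurable_indic.
  - exact: ltW.
  apply: ge0_le_integral => //.
  - by move=> w _; rewrite -EFinM lee_fin mulr_ge0 // ?indicE ?ler0n // ltW.
  - by apply/measurable_EFinP; apply: measurable_funM => //; exact: measurable_indic.
  - exact/measurable_EFinP.
  - move=> w _; rewrite -EFinM lee_fin indicE.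
    by case: (boolP (w \in S)) => [/set_mem|] /=; rewrite ?mulr1 ?mulr0.
have fS : Pr S \is a fin_num by exact: fin_num_measure.
rewrite -(fineK fS) lee_fin; rewrite -(fineK fS) -EFinM lee_fin in markov.
have qN0 : (0 < q ^+ N)%R by rewrite exprn_gt0.
rewrite /t mulrAC in markov.
have : (K * fine (Pr S) <= 1)%R.
  by rewrite -(ler_pM2r qN0) mul1r.
by rewrite -ler_pdivlMl // mulr1.
Qed.
End main.
Lemma key_alg (R : realType) (N : nat) (u : 'I_N -> R) (q K : R) : (0 < N)%N ->
  (forall i, 0 < u i) -> 0 < q -> 0 < K ->
  q < expR (N%:R^-1 * (\sum_(i < N) ln (u i)) - ln K / N%:R) -> K * q ^+ N <= \prod_(i < N) u i.
Proof.
move=> N0 u0 q0 K0 lt.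
have NR : (N%:R : R) != 0 by rewrite pnatr_eq0 -lt0n.
have e : expR (N%:R^-1 * (\sum_(i < N) ln (u i)) - ln K / N%:R) ^+ N = (\prod_(i < N) u i) / K.
  rewrite -expRM_natl.
  have -> : N%:R * (N%:R^-1 * (\sum_(i < N) ln (u i)) - ln K / N%:R) = (\sum_(i < N) ln (u i)) + - ln K.
    by field.
  rewrite expRD expRN lnK ?posrE // expR_sum.
  by congr (_ / _); apply: eq_bigr => i _; rewrite lnK // posrE.
have : q ^+ N < (\prod_(i < N) u i) / K.
  by rewrite -e ltrXn2r ?ltW // -lt0n.
by rewrite ltr_pdivlMr // mulrC => /ltW.
Qed.
Lemma m_alpha_inf (R : realType) (dO dT : measure_display) (Omega : measurableType dO)
  (T : measurableType dT) (N m : nat) (X : 'I_N -> Omega -> T) (Y : T -> R) (eps D b : R) :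
  (forall i, measurable_fun setT (X i)) -> measurable_fun setT Y ->
  measurable_fun setT (fun w => alpha_inf N m eps D b Y (fun i => X i w)).
Proof.
move=> mX mY; rewrite /alpha_inf; apply: measurable_funM => //.
apply: measurable_funB => //; apply: measurable_funM => //.
apply: measurableT_comp => //; apply: measurable_funB => //; apply: measurable_funM => //.
apply: measurable_sum => i; apply: measurableT_comp; first exact: measurable_ln.
apply: measurable_funD => //; apply: measurable_funM => //.
exact: measurableT_comp.
Qed.

Lemma m_alpha_sup (R : realType) (dO dT : measure_display) (Omega : measurableType dO)
  (T : measurableType dT) (N m : nat) (X : 'I_N -> Omega -> T) (Y : T -> R) (eps D b : R) :
  (forall i, measurable_fun setT (X i)) -> measurable_fun setT Y ->
  measurable_fun setT (fun w => alpha_sup N m eps D b Y (fun i => X i w)).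
Proof.
move=> mX mY; rewrite /alpha_sup; apply: measurable_funM => //.
apply: measurable_funB => //; apply: measurable_funM => //.
apply: measurableT_comp => //; apply: measurable_funB => //; apply: measurable_funM => //.
apply: measurable_sum => i; apply: measurableT_comp; first exact: measurable_ln.
apply: measurable_funB => //; apply: measurable_funM => //.
exact: measurableT_comp.
Qed.

Lemma m_prodZ (R : realType) (dO dT : measure_display) (Omega : measurableType dO)
  (T : measurableType dT) (N : nat) (X : 'I_N -> Omega -> T) (Y : T -> R) (a t : R) :
  (forall i, measurable_fun setT (X i)) -> measurable_fun setT Y ->
  measurable [set w | t <= \prod_(i < N) (1 + a * Y (X i w))].
Proof.
move=> mX mY.
have := measurable_fun_le measurableT (measurable_cst t)
  (measurable_prod (s := index_enum 'I_N) (h := fun i w => 1 + a * Y (X i w)) _).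
rewrite setTI; apply => i _; apply: measurable_funD => //; apply: measurable_funM => //.
exact: measurableT_comp.
Qed.

Lemma abound (R : realType) (N : nat) (b s : R) : 0 < s -> 0 < b -> b < N%:R / s ->
  `|b / N%:R| * s < 1.
Proof.
move=> s0 b0 bN.
have N0 : 0 < (N%:R : R).
  by move: bN; rewrite ltr_pdivlMr // => /(lt_trans (mulr_gt0 b0 s0)).
rewrite ger0_norm ?divr_ge0 ?ltW // mulrAC ltr_pdivrMr // mul1r.
by rewrite -ltr_pdivlMr.
Qed.

Lemma abound2 (R : realType) (N : nat) (b s : R) : 0 < s -> 0 < b -> b < N%:R / s ->
  `|- (b / N%:R)| * s < 1.
Proof. by rewrite normrN; exact: abound. Qed.

Lemma alg_inf (R : realType) (N : nat) (EY D b e : R) : 0 < D -> 0 < b -> (0 < N)%N ->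
  EY / D < (N%:R * e - N%:R) / (D * b) -> 1 + b / N%:R * EY < e.
Proof.
move=> D0 b0 N0; rewrite ltr_pdivlMr ?mulr_gt0 //.
have -> : EY / D * (D * b) = EY * b by field; rewrite gt_eqF.
have N0' : 0 < (N%:R : R) by rewrite ltr0n.
move=> h; have : EY * b / N%:R < e - 1 by rewrite ltr_pdivrMr //; lra.
have -> : b / N%:R * EY = EY * b / N%:R by ring.
lra.
Qed.

Lemma alg_sup (R : realType) (N : nat) (EY D b e : R) : 0 < D -> 0 < b -> (0 < N)%N ->
  (N%:R - N%:R * e) / (D * b) < EY / D -> 1 + - (b / N%:R) * EY < e.
Proof.
move=> D0 b0 N0; rewrite ltr_pdivrMr ?mulr_gt0 //.
have -> : EY / D * (D * b) = EY * b by field; rewrite gt_eqF.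
have N0' : 0 < (N%:R : R) by rewrite ltr0n.
move=> h; have : 1 - e < EY * b / N%:R by rewrite ltr_pdivlMr //; lra.
have -> : - (b / N%:R) * EY = - (EY * b / N%:R) by ring.
lra.
Qed.

Lemma upos (R : realType) (a s y : R) : `|y| <= s -> `|a| * s < 1 -> 0 < 1 + a * y.
Proof.
move=> ys as1; have : `|a * y| < 1.
  by rewrite normrM (le_lt_trans (ler_wpM2l (normr_ge0 a) ys)).
rewrite ltr_norml => /andP[h _]; lra.
Qed.

Lemma sub_bigsetU (T : Type) (I : eqType) (s : seq I) (F : I -> set T) k :
  k \in s -> F k `<=` \big[setU/set0]_(i <- s) F i.
Proof.
elim: s => // i s IH; rewrite in_cons big_cons => /orP[/eqP ->|/IH h].
  exact: subsetUl.
exact: subset_trans h (@subsetUr _ _ _).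
Qed.
Theorem theorem4 (R : realType) (dT : measure_display) (T : measurableType dT)
  (lam : {measure set T -> \bar R}) (f : T -> R) (P : probability T R)
  (dO : measure_display) (Omega : measurableType dO) (Pr : probability Omega R)
  (N : nat) (X : 'I_N -> Omega -> T)
  (m : nat) (fs : 'I_m -> T -> R) (C : 'I_m -> R) (eps : R)
  (beta1 beta2 : 'I_m -> R) :
  sigma_finite setT lam ->
  (* f is a density of P w.r.t. lam, and f is in L^2(lam) *)
  measurable_fun setT f ->
  {ae lam, forall x, 0 <= f x} ->
  (forall A, measurable A -> P A = (\int[lam]_(x in A) (f x)%:E)%E) ->
  lam.-integrable setT (fun x => (f x ^+ 2)%:E) ->
  iid_sample Pr P X ->
  (* f_k in L^2 with D_k > 0 and the uniform bound *)
  (forall k, measurable_fun setT (fs k)) ->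
  (forall k, lam.-integrable setT (fun x => (fs k x ^+ 2)%:E)) ->
  (forall k, 0 < Rintegral lam setT (fun x => fs k x ^+ 2)) ->
  (forall k, 0 < C k) ->
  (forall k x, `|fs k x| <= Num.sqrt (C k * Rintegral lam setT (fun x => fs k x ^+ 2))) ->
  0 < eps ->
  (forall k, 0 < beta1 k /\
     beta1 k < N%:R / Num.sqrt (C k * Rintegral lam setT (fun x => fs k x ^+ 2))) ->
  (forall k, 0 < beta2 k /\
     beta2 k < N%:R / Num.sqrt (C k * Rintegral lam setT (fun x => fs k x ^+ 2))) ->
  (Pr [set w | (forall k : 'I_m,
        let Dk := Rintegral lam setT (fun x => fs k x ^+ 2) in
        let abar := Rintegral lam setT (fun x => fs k x * f x) / Dk in
        alpha_inf N m eps Dk (beta1 k) (fs k) (fun i => X i w) <= abar /\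
        abar <= alpha_sup N m eps Dk (beta2 k) (fs k) (fun i => X i w))%R]
   >= (1 - eps)%:E)%E.
Proof.
move=> _ mf f0 Pf _ iid mfs _ D0 C0 fsb eps0 b1 b2.
have mX i : measurable_fun setT (X i) by case: iid.
set S := [set _ | _].
have [m0|m0] := posnP m.
  have -> : S = setT.
    by apply/seteqP; split => // w _ k; have := ltn_ord k; rewrite {2}m0.
  set u := (UU in (_ <= UU)%E).
  have -> : u = 1%E by exact: probability_setT.
  by rewrite lee_fin; lra.
pose k0 : 'I_m := Ordinal m0.
have N0 : (0 < N)%N.
  rewrite lt0n; apply/negP => /eqP N0; move: (b1 k0); rewrite N0 mul0r; case=> h1 h2; lra.
pose Dk k := Rintegral lam setT (fun x => fs k x ^+ 2).
pose sk k := Num.sqrt (C k * Dk k).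
have sk0 k : 0 < sk k by rewrite /sk sqrtr_gt0; exact: mulr_gt0 (C0 k) (D0 k).
pose EY k := Rintegral lam setT (fun x => fs k x * f x).
pose K := 2 * m%:R / eps.
have K0 : 0 < K by rewrite divr_gt0 // mulr_gt0 // ltr0n.
pose a1 k := beta1 k / N%:R.
pose a2 k := - (beta2 k / N%:R).
have ab1 k : `|a1 k| * sk k < 1 by case: (b1 k) => h1 h2; exact: abound.
have ab2 k : `|a2 k| * sk k < 1 by case: (b2 k) => h1 h2; exact: abound2.
pose E1 k := [set w | K * (1 + a1 k * EY k) ^+ N <= \prod_(i < N) (1 + a1 k * fs k (X i w))].
pose E2 k := [set w | K * (1 + a2 k * EY k) ^+ N <= \prod_(i < N) (1 + a2 k * fs k (X i w))].
have bb1 k := bad_bound _ _ _ _ _ _ mf f0 Pf _ _ _ _ _ iid _ _ _ _ (mfs k) (fsb k) (ab1 k) K0.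
have bb2 k := bad_bound _ _ _ _ _ _ mf f0 Pf _ _ _ _ _ iid _ _ _ _ (mfs k) (fsb k) (ab2 k) K0.
have mE1 k : measurable (E1 k) by exact: m_prodZ.
have mE2 k : measurable (E2 k) by exact: m_prodZ.
pose U := \big[setU/set0]_(k < m) (E1 k `|` E2 k).
have mU : measurable U by apply: bigsetU_measurable => k _; exact: measurableU.
have PU : (Pr U <= eps%:E)%E.
  have := @union_bound _ _ _ Pr _ (index_enum 'I_m) (fun k => E1 k `|` E2 k)
    (fun k => measurableU _ _ (mE1 k) (mE2 k)).
  move=> /le_trans; apply.
  apply: le_trans (lee_sum (g := fun=> (K^-1 + K^-1)%:E) _ _) _.
    move=> k _; apply: le_trans (measureU2 _ _ _) _ => //.
    by rewrite EFinD; apply: leeD; [case: (bb1 k)|case: (bb2 k)].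
  rewrite sumEFin sumr_const card_ord lee_fin /K.
  have mR : (m%:R : R) != 0 by rewrite pnatr_eq0 -lt0n.
  have -> : ((2 * m%:R / eps)^-1 + (2 * m%:R / eps)^-1) *+ m = eps.
    by rewrite -mulr_natr; field; rewrite mR gt_eqF.
  by [].
have mS : measurable S.
  have -> : S = \bigcap_(k in [set: 'I_m])
      ([set w | alpha_inf N m eps (Dk k) (beta1 k) (fs k) (fun i => X i w) <= EY k / Dk k] `&`
       [set w | EY k / Dk k <= alpha_sup N m eps (Dk k) (beta2 k) (fs k) (fun i => X i w)]).
    by rewrite /S; apply/seteqP; split => w /= h k; [move=> _; exact: h | exact: h k I].
  apply: fin_bigcap_measurable => // k _; apply: measurableI.
  - have := measurable_fun_le measurableT (@m_alpha_inf _ _ _ _ _ N m X (fs k) eps (Dk k) (beta1 k) mX (mfs k))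
      (measurable_cst (EY k / Dk k)).
    by rewrite setTI.
  - have := measurable_fun_le measurableT (measurable_cst (EY k / Dk k))
      (@m_alpha_sup _ _ _ _ _ N m X (fs k) eps (Dk k) (beta2 k) mX (mfs k)).
    by rewrite setTI.
have cSU : ~` S `<=` U.
  move=> w nS.
  have [k nk] : exists k, ~ (alpha_inf N m eps (Dk k) (beta1 k) (fs k) (fun i => X i w) <= EY k / Dk k
       /\ EY k / Dk k <= alpha_sup N m eps (Dk k) (beta2 k) (fs k) (fun i => X i w)).
    by apply/existsNP => hall; apply: nS; rewrite /S /=; exact: hall.
  apply: (@sub_bigsetU _ _ _ _ k); first exact: mem_index_enum.
  have [hA|hA] := lerP (alpha_inf N m eps (Dk k) (beta1 k) (fs k) (fun i => X i w)) (EY k / Dk k).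
  - right.
    have hB : alpha_sup N m eps (Dk k) (beta2 k) (fs k) (fun i => X i w) < EY k / Dk k.
      by rewrite ltNge; apply/negP => hB; apply: nk.
    rewrite /alpha_sup in hB.
    have eqS : \sum_(i < N) ln (1 - beta2 k / N%:R * fs k (X i w)) =
               \sum_(i < N) ln (1 + a2 k * fs k (X i w)).
      by apply: eq_bigr => i _; rewrite /a2 mulNr.
    rewrite eqS in hB.
    have hq := @alg_sup _ N (EY k) (Dk k) (beta2 k) _ (D0 k) (b2 k).1 N0 hB.
    rewrite /E2 /=; apply: (@key_alg _ N _ _ K N0 _ _ K0 hq).
    + by move=> i; apply: upos (fsb k (X i w)) (ab2 k).
    + by case: (bb2 k).
  - left.
    rewrite /alpha_inf in hA.
    have hq := @alg_inf _ N (EY k) (Dk k) (beta1 k) _ (D0 k) (b1 k).1 N0 hA.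
    rewrite /E1 /=; apply: (@key_alg _ N _ _ K N0 _ _ K0 hq).
    + by move=> i; apply: upos (fsb k (X i w)) (ab1 k).
    + by case: (bb1 k).
set u := (UU in (_ <= UU)%E).
have hc : Pr (~` S) = (1 - u)%E by exact: probability_setC.
have hle : (Pr (~` S) <= eps%:E)%E.
  apply: le_trans PU; apply: le_measure => //; apply/mem_set => //.
  exact: measurableC.
have fu : u \is a fin_num by exact: fin_num_measure.
rewrite hc -(fineK fu) -EFinB lee_fin in hle.
rewrite -(fineK fu) lee_fin; lra.
Qed.
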